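(* Let $(\mathfrak{A},\mathfrak{A}_0)$ be a CQ*-algebra as in the context, let $H=H^*\in\mathfrak{A}$ and $\omega\in E(\mathfrak{A}_0)$, and suppose $\overline{\omega}$ is a nondegenerate ground state of $H$ with eigenvalue $\alpha_*$. Then the following are equivalent: (i) $\overline{\omega}$ is a gapped ground state of $H$; (ii) there exists $\Delta>0$ such that $-i\,\overline{\omega}(A^*\delta_H(A))\ge\Delta\left(\omega(A^*A)-|\omega(A)|^2\right)$ for all $A\in\mathfrak{A}_0$.
   Context: Let $\mathfrak{A}_0$ be a unital C*-algebra with C*-norm $\|\cdot\|_0$ and unit $I$, and $\|\cdot\|$ another norm on $\mathfrak{A}_0$ with $\|A\|\le\|A\|_0$, $\|AB\|\le\|A\|\,\|B\|_0$, $\|A^*\|=\|A\|$. $\mathfrak{A}$ is the $\|\cdot\|$-completion of $\mathfrak{A}_0$, with $XA:=\lim A_nA$, $AX:=\lim AA_n$, $X^*:=\lim A_n^*$ for $X\in\mathfrak{A}$, $A\in\mathfrak{A}_0$, $A_n\in\mathfrak{A}_0$, $\|A_n-X\|\to0$. $E(\mathfrak{A}_0)$ is the set of positive linear functionals $\omega$ on $\mathfrak{A}_0$ with $\omega(I)=1$ and $|\omega(A)|\le\gamma\|A\|$ for some $\gamma>0$; $\overline{\omega}$ is its continuous extension to $\mathfrak{A}$. $(\pi_\omega,\lambda_\omega,\mathcal{H}_\omega)$ is the GNS construction of $\omega$ on $\mathfrak{A}_0$ ($\lambda_\omega$ linear with dense range, $(\lambda_\omega(A)|\lambda_\omega(B))=\omega(B^*A)$).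 For $X\in\mathfrak{A}$, $B\in\mathfrak{A}_0$, $\pi_{\overline{\omega}}(X)\lambda_\omega(B)$ is the conjugate-linear functional on $\lambda_\omega(\mathfrak{A}_0)$ given by $\langle\pi_{\overline{\omega}}(X)\lambda_\omega(B),\lambda_\omega(C)\rangle=\overline{\omega}(C^*XB)$; it is bounded if it extends continuously to $\mathcal{H}_\omega$, and then $[\cdot]$ denotes the representing vector. $\delta_H(A):=i(HA-AH)$ for $A\in\mathfrak{A}_0$; $\overline{\omega}(A^*HA)$ means $\overline{\omega}(A^*(HA))$. $\overline{\omega}$ is a ground state for $H$ with eigenvalue $\alpha_*$ if $\overline{\omega}(AH)=\alpha_*\overline{\omega}(A)$ for all $A\in\mathfrak{A}_0$ and $\langle\pi_{\overline{\omega}}(H)\lambda_\omega(B),\lambda_\omega(B)\rangle\ge\alpha_*(\lambda_\omega(B)|\lambda_\omega(B))$ for all $B\in\mathfrak{A}_0$. Let $\mathrm{Ker}(\pi_{\overline{\omega}}(H)-\alpha_*I)$ denote the set of vectors $\lambda_\omega(B)$, $B\in\mathfrak{A}_0$, such that $\pi_{\overline{\omega}}(H)\lambda_\omega(B)$ is bounded and $[\pi_{\overline{\omega}}(H)\lambda_\omega(B)]=\alpha_*\lambda_\omega(B)$. The ground state $\overline{\omega}$ is nondegenerate if $\mathrm{Ker}(\pi_{\overline{\omega}}(H)-\alpha_*I)=\mathbb{C}\lambda_\omega(I)$, and gapped if there is $\Delta>0$ such that $\overline{\omega}(A^*HA)\ge(\alpha_*+\Delta)\omega(A^*A)$ for all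 $A\in\mathfrak{A}_0$ with $\lambda_\omega(A)\in(\mathrm{Ker}(\pi_{\overline{\omega}}(H)-\alpha_*I))^\perp$. *)

(* Defs.v *)
From HB Require Import structures.
From mathcomp Require Import all_boot all_order all_algebra.
From mathcomp Require Import complex reals.
From Stdlib Require Import ClassicalEpsilon.
Set Implicit Arguments. Unset Strict Implicit. Unset Printing Implicit Defensive.
Import Order.TTheory GRing.Theory Num.Theory.
Local Open Scope ring_scope.
Local Open Scope complex_scope.

Section Defs.
Variable R : realType.

Definition is_norm (A : lmodType R[i]) (N : A -> R) : Prop :=
  [/\ forall x, 0 <= N x,
      forall x, N x = 0 -> x = 0,
      forall (c : R[i]) x, (N (c *: x))%:C = `|c| * (N x)%:C
    & forall x y, N (x + y) <= N x + N y].

Definition cauchy_seq (A : zmodType) (N : A -> R) (u : nat -> A) : Prop :=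
  forall e : R, 0 < e -> exists M, forall m n, (M <= m)%N -> (M <= n)%N ->
    N (u m - u n) < e.

Definition cvg_seq (A : zmodType) (N : A -> R) (u : nat -> A) (l : A) : Prop :=
  forall e : R, 0 < e -> exists M, forall n, (M <= n)%N -> N (u n - l) < e.

Definition complete_for (A : zmodType) (N : A -> R) : Prop :=
  forall u, cauchy_seq N u -> exists l, cvg_seq N u l.

Definition is_involution (A : algType R[i]) (s : A -> A) : Prop :=
  [/\ forall x, s (s x) = x,
      forall x y, s (x + y) = s x + s y,
      forall (c : R[i]) x, s (c *: x) = c^* *: s x
    & forall x y, s (x * y) = s y * s x].

Definition is_unital_Cstar (A : algType R[i]) (s : A -> A) (N0 : A -> R) : Prop :=
  [/\ is_involution s, is_norm N0,
      forall x y, N0 (x * y) <= N0 x * N0 y,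
      forall x, N0 (s x * x) = N0 x ^+ 2
    & complete_for N0].

(* The completion A of (A0, N) is represented by N-Cauchy sequences in A0. *)
Definition CQstar (A : algType R[i]) (s : A -> A) (N0 N : A -> R) : Prop :=
  [/\ is_unital_Cstar s N0, is_norm N,
      forall x, N x <= N0 x,
      forall x y, N (x * y) <= N x * N0 y
    & forall x, N (s x) = N x].

(* X in the completion, given by an N-Cauchy sequence Xs; X = X^* *)
Definition selfadj (A : algType R[i]) (s : A -> A) (N : A -> R) (Xs : nat -> A) :=
  cvg_seq N (fun n => s (Xs n) - Xs n) 0.

Definition ccvg (u : nat -> R[i]) (l : R[i]) : Prop :=
  forall e : R, 0 < e -> exists M, forall n, (M <= n)%N -> `|u n - l| < e%:C.

Definition clim (u : nat -> R[i]) : R[i] := epsilon (inhabits 0) (ccvg u).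

Definition obar (A : algType R[i]) (om : A -> R[i]) (Xs : nat -> A) : R[i] :=
  clim (fun n => om (Xs n)).

Definition in_E (A : algType R[i]) (s : A -> A) (N : A -> R) (om : A -> R[i]) :=
  [/\ forall (c : R[i]) x y, om (c *: x + y) = c * om x + om y,
      forall x, 0 <= om (s x * x),
      om 1 = 1
    & exists g : R, 0 < g /\ forall x, `|om x| <= (g * N x)%:C].

Definition deltaH (A : algType R[i]) (Hs : nat -> A) (X : A) : nat -> A :=
  fun n => 'i *: (Hs n * X - X * Hs n).

Section GNS.
Variables (A : algType R[i]) (s : A -> A) (om : A -> R[i]) (Hs : nat -> A) (a : R[i]).

Definition ground_state : Prop :=
  (forall X, obar om (fun n => X * Hs n) = a * om X) /\
  (forall B, a * om (s B * B) <= obar om (fun n => s B * Hs n * B)).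

(* lambda_om(B) = lambda_om(B') in the GNS space *)
Definition lam_eq (B B' : A) : Prop := om (s (B - B') * (B - B')) = 0.

(* pi(H) lambda(B) is bounded with representing vector a lambda(B), i.e.
   <pi(H)lambda(B), lambda(D)> = (a lambda(B) | lambda(D)) for all D *)
Definition in_ker (B : A) : Prop :=
  forall D, obar om (fun n => s D * Hs n * B) = a * om (s D * B).

(* the vector lambda(B) belongs to Ker(pi(H) - a I) *)
Definition vec_in_ker (B : A) : Prop := exists B', lam_eq B B' /\ in_ker B'.

(* Ker(pi(H) - a I) = C lambda(I) *)
Definition gs_nondegenerate : Prop :=
  forall B, vec_in_ker B <-> exists c : R[i], lam_eq B (c *: 1).

(* lambda(X) in Ker^perp *)
Definition in_ker_perp (X : A) : Prop :=
  forall B, vec_in_ker B -> om (s B * X) = 0.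

Definition gapped : Prop :=
  exists D : R, 0 < D /\ forall X, in_ker_perp X ->
    (a + D%:C) * om (s X * X) <= obar om (fun n => s X * (Hs n * X)).
End GNS.
End Defs.

(* Main.v *)
Require Import Defs.
From HB Require Import structures.
From mathcomp Require Import all_boot all_order all_algebra.
From mathcomp Require Import complex reals classical_sets.
From mathcomp Require Import ring lra.
Import Order.TTheory GRing.Theory Num.Theory.
Notation Re := complex.Re.
Notation Im := complex.Im.
Local Open Scope ring_scope.
Local Open Scope complex_scope.
Local Open Scope classical_set_scope.
Local Open Scope ring_scope.
Set Implicit Arguments. Unset Strict Implicit. Unset Printing Implicit Defensive.

Section RealC.
Variable R : realType.

Lemma real_complete (u : nat -> R) :
  (forall e : R, 0 < e -> exists M, forall m n, (M <= m)%N -> (M <= n)%N -> `|u m - u n| < e) ->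
  exists l, forall e : R, 0 < e -> exists M, forall n, (M <= n)%N -> `|u n - l| < e.
Proof.
move=> hc.
pose S := [set x : R | exists M, forall n, (M <= n)%N -> x <= u n].
have [M1 hM1] := hc 1 ltr01.
have Sne : S !=set0.
  exists (u M1 - 1); exists M1 => n hn.
  have := hM1 _ _ (leqnn M1) hn; rewrite ltr_norml => /andP[h1 h2]; lra.
have ubS : forall M e, (forall m n, (M <= m)%N -> (M <= n)%N -> `|u m - u n| < e) ->
   forall x, S x -> x <= u M + e.
  move=> M e hM x [M' hM'].
  have := hM' (maxn M M') (leq_maxr _ _).
  have := hM _ _ (leq_maxl M M') (leqnn M); rewrite ltr_norml => /andP[h1 h2] h3; lra.
have hsup : has_sup S by split => //; exists (u M1 + 1) => x /(ubS _ _ hM1).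
exists (sup S) => e e0.
have e20 : 0 < e / 2 by rewrite divr_gt0.
have [M hM] := hc _ e20.
exists M => n hn.
have h1 : u M - e / 2 <= sup S.
  apply: ub_le_sup; first by case: hsup.
  exists M => k hk; have := hM _ _ (leqnn M) hk; rewrite ltr_norml => /andP[h h']; lra.
have h2 : sup S <= u M + e / 2 by apply: ge_sup => // x /(ubS _ _ hM).
have := hM _ _ hn (leqnn M); rewrite !ltr_norml => /andP[h3 h4].
apply/andP; split; lra.
Qed.

Definition nrm (z : R[i]) : R := Re `|z|.

Lemma nrmE z : `|z| = (nrm z)%:C.
Proof. by rewrite /nrm RRe_real // normr_real. Qed.

Lemma nrm_ge0 z : 0 <= nrm z.
Proof. by rewrite -ler0c -nrmE. Qed.

Lemma nrm_lt z e : (`|z| < e%:C) = (nrm z < e).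
Proof. by rewrite nrmE ltcR. Qed.

Lemma nrm_le z e : (`|z| <= e%:C) = (nrm z <= e).
Proof. by rewrite nrmE lecR. Qed.

Lemma nrmD z w : nrm (z + w) <= nrm z + nrm w.
Proof. by rewrite -lecR rmorphD /= -!nrmE ler_normD. Qed.

Lemma nrmM z w : nrm (z * w) = nrm z * nrm w.
Proof. by apply: complexI; rewrite rmorphM /= -!nrmE normrM. Qed.

Lemma nrmN z : nrm (- z) = nrm z.
Proof. by rewrite /nrm normrN. Qed.

Lemma nrmB z w : nrm (z - w) = nrm (w - z).
Proof. by rewrite -nrmN opprB. Qed.

Lemma nrm0 : nrm 0 = 0.
Proof. by rewrite /nrm normr0. Qed.

Lemma nrm_eq0 z : nrm z = 0 -> z = 0.
Proof. by move=> h; apply/eqP; rewrite -normr_eq0 nrmE h. Qed.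

Lemma nrmR (k : R) : nrm k%:C = `|k|.
Proof. by apply: complexI; rewrite -nrmE normc_def /= expr0n /= addr0 sqrtr_sqr. Qed.

Lemma nrm_i : nrm 'i = 1.
Proof. by apply: complexI; rewrite -nrmE normc_def /= expr0n /= add0r expr1n sqrtr1. Qed.

Lemma nrm_Re z : `|Re z| <= nrm z.
Proof. by rewrite -lecR -nrmE normc_ge_Re. Qed.

Lemma nrm_Im z : `|Im z| <= nrm z.
Proof. 
have := nrm_Re (z * 'i); rewrite ReiNIm normrN nrmM nrm_i mulr1 //.
Qed.

Lemma nrm_ReIm z : nrm z <= `|Re z| + `|Im z|.
Proof.
rewrite {1}[z]complexE; apply: (le_trans (nrmD _ _)).
by rewrite nrmM nrm_i mul1r !nrmR.
Qed.

Lemma nrm_conj z : nrm (z^*) = nrm z.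
Proof. by rewrite /nrm normcJ. Qed.

Definition cv (u : nat -> R[i]) l :=
  forall e : R, 0 < e -> exists M, forall n, (M <= n)%N -> nrm (u n - l) < e.

Lemma ccvgE u l : ccvg u l <-> cv u l.
Proof.
split=> h e /h [M hM]; exists M => n /hM; by rewrite nrm_lt.
Qed.

Lemma cv_uniq u l l' : cv u l -> cv u l' -> l = l'.
Proof.
move=> h1 h2; apply/eqP; rewrite -subr_eq0; apply/eqP; apply: nrm_eq0.
have hd := nrm_ge0 (l - l').
case: (ltrgtP (nrm (l - l')) 0) => // hp; first by move: hp; rewrite ltNge hd.
have e0 : 0 < nrm (l - l') / 2 by rewrite divr_gt0.
have [M1 hM1] := h1 _ e0; have [M2 hM2] := h2 _ e0.
have a1 := hM1 (maxn M1 M2) (leq_maxl _ _).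
have a2 := hM2 (maxn M1 M2) (leq_maxr _ _).
have := nrmD (l - u (maxn M1 M2)) (u (maxn M1 M2) - l').
rewrite addrA subrK nrmB; lra.
Qed.

Lemma clim_eq u l : ccvg u l -> @clim R u = l.
Proof.
move=> h; rewrite /clim.
have := ClassicalEpsilon.epsilon_spec (inhabits 0) (ccvg u) (ex_intro _ l h).
by move=> /ccvgE h1; apply: cv_uniq h1 _; apply/ccvgE.
Qed.

Lemma cv_lin (c : R[i]) u v l m : cv u l -> cv v m ->
  cv (fun n => c * u n + v n) (c * l + m).
Proof.
move=> hu hv e e0.
have k0 : 0 < nrm c + 1 by have := nrm_ge0 c; lra.
have e1 : 0 < e / 2 / (nrm c + 1) by rewrite !divr_gt0.
have e2 : 0 < e / 2 by rewrite divr_gt0.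
have [M1 hM1] := hu _ e1; have [M2 hM2] := hv _ e2.
exists (maxn M1 M2) => n; rewrite geq_max => /andP[n1 n2].
have a1 := hM1 _ n1; have a2 := hM2 _ n2.
have -> : c * u n + v n - (c * l + m) = c * (u n - l) + (v n - m).
  by ring.
apply: (le_lt_trans (nrmD _ _)); rewrite nrmM.
have hc := nrm_ge0 c; have hx := nrm_ge0 (u n - l).
have : nrm c * nrm (u n - l) <= (nrm c + 1) * (e / 2 / (nrm c + 1)).
  by apply: ler_pM => //; [lra | apply: ltW].
have -> : (nrm c + 1) * (e / 2 / (nrm c + 1)) = e / 2.
  by rewrite mulrC divfK // gt_eqF.
lra.
Qed.

Lemma cv_cst c : cv (fun _ => c) c.
Proof. by move=> e e0; exists 0%N => n _; rewrite subrr nrm0. Qed.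

Lemma cv_ext u v l : (forall n, u n = v n) -> cv u l -> cv v l.
Proof. by move=> h hu e /hu [M hM]; exists M => n; rewrite -h; apply: hM. Qed.

Lemma cv_conj u l : cv u l -> cv (fun n => (u n)^*) l^*.
Proof. by move=> hu e /hu [M hM]; exists M => n /hM; rewrite -rmorphB nrm_conj. Qed.

Lemma cv_near u v l : cv u l ->
  (forall e : R, 0 < e -> exists M, forall n, (M <= n)%N -> nrm (v n - u n) < e) ->
  cv v l.
Proof.
move=> hu huv e e0.
have e2 : 0 < e / 2 by rewrite divr_gt0.
have [M1 hM1] := hu _ e2; have [M2 hM2] := huv _ e2.
exists (maxn M1 M2) => n; rewrite geq_max => /andP[n1 n2].
have a1 := hM1 _ n1; have a2 := hM2 _ n2.
have := nrmD (v n - u n) (u n - l); rewrite addrA subrK; lra.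
Qed.

Lemma cv_complete u :
  (forall e : R, 0 < e -> exists M, forall m n, (M <= m)%N -> (M <= n)%N -> nrm (u m - u n) < e) ->
  exists l, cv u l.
Proof.
move=> hc.
have [lr hr] : exists lr, forall e : R, 0 < e -> exists M, forall n, (M <= n)%N -> `|Re (u n) - lr| < e.
  apply: real_complete => e /hc [M hM]; exists M => m n hm hn.
  by rewrite -raddfB /=; apply: le_lt_trans (nrm_Re _) (hM _ _ hm hn).
have [li hi] : exists li, forall e : R, 0 < e -> exists M, forall n, (M <= n)%N -> `|Im (u n) - li| < e.
  apply: real_complete => e /hc [M hM]; exists M => m n hm hn.
  by rewrite -raddfB /=; apply: le_lt_trans (nrm_Im _) (hM _ _ hm hn).
exists (lr +i* li) => e e0.
have e2 : 0 < e / 2 by rewrite divr_gt0.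
have [M1 hM1] := hr _ e2; have [M2 hM2] := hi _ e2.
exists (maxn M1 M2) => n; rewrite geq_max => /andP[n1 n2].
have a1 := hM1 _ n1; have a2 := hM2 _ n2.
apply: le_lt_trans (nrm_ReIm _) _.
have -> : Re (u n - lr +i* li) = Re (u n) - lr by rewrite raddfB.
have -> : Im (u n - lr +i* li) = Im (u n) - li by rewrite raddfB.
lra.
Qed.

End RealC.

Section Alg.
Variable R : realType.
Variables (A : algType R[i]) (s : A -> A) (N0 N : A -> R) (Hs : nat -> A) (om : A -> R[i]).
Hypothesis hCQ : CQstar s N0 N.
Hypothesis hE : in_E s N om.

Lemma omDZ c x y : om (c *: x + y) = c * om x + om y.
Proof. by case: hE. Qed.
Lemma om_pos x : 0 <= om (s x * x).
Proof. by case: hE. Qed.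
Lemma om1 : om 1 = 1.
Proof. by case: hE. Qed.
Lemma om0 : om 0 = 0.
Proof.
by have := omDZ (-1) 0 0; rewrite scaler0 addr0 mulN1r addNr.
Qed.
Lemma omD x y : om (x + y) = om x + om y.
Proof. by rewrite -[x]scale1r omDZ mul1r scale1r. Qed.
Lemma omZ c x : om (c *: x) = c * om x.
Proof. by rewrite -[c *: x]addr0 omDZ om0 addr0. Qed.
Lemma omN x : om (- x) = - om x.
Proof. by rewrite -scaleN1r omZ mulN1r. Qed.
Lemma omB x y : om (x - y) = om x - om y.
Proof. by rewrite omD omN. Qed.

Lemma sK x : s (s x) = x.
Proof. by case: hCQ => [[[]]]. Qed.
Lemma sD x y : s (x + y) = s x + s y.
Proof. by case: hCQ => [[[]]]. Qed.
Lemma sZ c x : s (c *: x) = c^* *: s x.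
Proof. by case: hCQ => [[[]]]. Qed.
Lemma sM x y : s (x * y) = s y * s x.
Proof. by case: hCQ => [[[]]]. Qed.
Lemma sN x : s (- x) = - s x.
Proof. by rewrite -scaleN1r sZ rmorphN rmorph1 scaleN1r. Qed.
Lemma sB x y : s (x - y) = s x - s y.
Proof. by rewrite sD sN. Qed.
Lemma s1 : s 1 = 1.
Proof. by transitivity (s 1 * s (s 1)); [rewrite sK mulr1 | rewrite -sM mulr1 sK]. Qed.

Lemma N_ge0 x : 0 <= N x.
Proof. by case: hCQ => _ []. Qed.
Lemma N0_ge0 x : 0 <= N0 x.
Proof. by case: hCQ => [[_ []]]. Qed.
Lemma N_le x : N x <= N0 x.
Proof. by case: hCQ. Qed.
Lemma N_Mr x y : N (x * y) <= N x * N0 y.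
Proof. by case: hCQ. Qed.
Lemma N_s x : N (s x) = N x.
Proof. by case: hCQ. Qed.
Lemma N0_M x y : N0 (x * y) <= N0 x * N0 y.
Proof. by case: hCQ => [[]]. Qed.
Lemma N0_Cstar x : N0 (s x * x) = N0 x ^+ 2.
Proof. by case: hCQ => [[]]. Qed.

Lemma N0_s_le x : N0 x <= N0 (s x).
Proof.
have := N0_M (s x) x; rewrite N0_Cstar expr2.
have := N0_ge0 x; have := N0_ge0 (s x); nra.
Qed.
Lemma N0_s x : N0 (s x) = N0 x.
Proof. by apply/eqP; rewrite eq_le N0_s_le -{2}(sK x) N0_s_le. Qed.

Lemma N_Ml x y : N (x * y) <= N0 x * N y.
Proof. by rewrite -N_s sM mulrC -(N_s y) -(N0_s x); apply: N_Mr. Qed.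

Lemma N_3 x y z : N (x * y * z) <= N0 x * N y * N0 z.
Proof.
apply: (le_trans (N_Mr _ _)); apply: ler_wpM2r; first exact: N0_ge0.
exact: N_Ml.
Qed.

Lemma om_bound : exists g : R, 0 < g /\ forall x, nrm (om x) <= g * N x.
Proof.
case: hE => _ _ _ [g [g0 hg]]; exists g; split => // x.
by rewrite -nrm_le; apply: hg.
Qed.


Lemma ge0_conj (z : R[i]) : 0 <= z -> z^* = z.
Proof. exact: geC0_conj. Qed.

Lemma conj_i : ('i : R[i])^* = - 'i.
Proof. by apply/eqP; rewrite eq_complex /= oppr0 !eqxx. Qed.

Lemma conj_R (r : R) : (r%:C)^* = r%:C.
Proof. by apply/eqP; rewrite eq_complex /= oppr0 !eqxx. Qed.

Lemma conjM (x y : R[i]) : (x * y)^* = x^* * y^*.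
Proof. exact: rmorphM. Qed.
Lemma conjN (x : R[i]) : (- x)^* = - x^*.
Proof. exact: rmorphN. Qed.
Lemma conjD (x y : R[i]) : (x + y)^* = x^* + y^*.
Proof. exact: rmorphD. Qed.
Lemma conjB (x y : R[i]) : (x - y)^* = x^* - y^*.
Proof. exact: rmorphB. Qed.

Lemma herm_aux (P Q Pc Qc c1 c2 : R[i]) :
  c1 + Pc + (Qc + c2) = c1 + P + (Q + c2) ->
  c1 + - 'i * Pc + ('i * Qc + 'i * - 'i * c2) = c1 + 'i * P + (- 'i * Q + - 'i * 'i * c2) ->
  Q = Pc.
Proof.
move=> h1 h2.
have ii : ('i : R[i]) * 'i = -1 by rewrite -expr2 sqr_i.
have key : 2 * (Pc - Q) = ((c1 + Pc + (Qc + c2)) - (c1 + P + (Q + c2)))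
   + 'i * ((c1 + - 'i * Pc + ('i * Qc + 'i * - 'i * c2)) - (c1 + 'i * P + (- 'i * Q + - 'i * 'i * c2)))
   + ('i * 'i + 1) * (Pc - Qc + P - Q) by ring.
rewrite h1 h2 !subrr ii addNr mulr0 mul0r !addr0 in key.
move/eqP: key; rewrite mulf_eq0 pnatr_eq0 /= subr_eq0 => /eqP ->. done.
Qed.

Lemma om_herm x y : om (s y * x) = (om (s x * y))^*.
Proof.
set P := om (s x * y); set Q := om (s y * x).
have c1 := ge0_conj (om_pos x); have c2 := ge0_conj (om_pos y).
have h1 := ge0_conj (om_pos (x + y)).
rewrite sD mulrDl !mulrDr !omD -/P -/Q !rmorphD /= c1 c2 in h1.
have h2 := ge0_conj (om_pos (x + 'i *: y)).
rewrite sD sZ mulrDl !mulrDr -!scalerAl -!scalerAr scalerA !omD !omZ -/P -/Q in h2.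
rewrite !rmorphD !rmorphM /= c1 c2 conjCK conj_i in h2.
exact: herm_aux h1 h2.
Qed.

Lemma om_s x : om (s x) = (om x)^*.
Proof. by have := om_herm 1 x; rewrite mulr1 s1 mul1r. Qed.

Lemma om_cs Z W : om (s Z * Z) = 0 -> om (s Z * W) = 0.
Proof.
move=> hZ; set p := om (s Z * W).
have hp' : om (s W * Z) = p^* by rewrite om_herm.
set c := om (s W * W).
have hr : forall r : R, 0 <= c - 2 * r%:C * (p * p^*).
  move=> r; apply: le_trans (om_pos (W + (- r%:C * p) *: Z)) _.
  rewrite le_eqVlt; apply/orP; left; apply/eqP.
  rewrite sD sZ mulrDl !mulrDr -!scalerAl -!scalerAr scalerA !omD !omZ hZ hp' -/p -/c.
  rewrite conjM conjN conj_R; ring.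
have hc : c = (Re c)%:C by rewrite RRe_real // ger0_real // om_pos.
have hq : p * p^* = (nrm p ^+ 2)%:C by rewrite -normCK nrmE rmorphXn.
have hr' : forall r : R, 0 <= Re c - 2 * r * nrm p ^+ 2.
  move=> r; have := hr r; rewrite hq hc => h; rewrite -ler0c.
  suff -> : (Re c - 2 * r * nrm p ^+ 2)%:C = (Re c)%:C - 2 * r%:C * (nrm p ^+ 2)%:C by [].
  by apply/eqP; rewrite eq_complex /=; apply/andP; split; apply/eqP; ring.
suff hn : nrm p = 0 by exact: nrm_eq0 hn.
have c0 := hr' 0; rewrite mulr0 mul0r subr0 in c0.
have n0 := nrm_ge0 p.
case: (ltrgtP (nrm p) 0) => //; first by rewrite ltNge n0.
move=> np.
have q0 : 0 < nrm p ^+ 2 by rewrite exprn_gt0.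
have := hr' ((Re c + 1) / nrm p ^+ 2).
rewrite -mulrA divfK ?gt_eqF //; lra.
Qed.


Lemma s0 : s 0 = 0.
Proof. by have := sB 0 0; rewrite !subrr. Qed.

Hypothesis hH : cauchy_seq N Hs.
Hypothesis hsa : selfadj s N Hs.

Lemma conv3 P Q : exists l, cv (fun n => om (P * Hs n * Q)) l.
Proof.
apply: cv_complete => e e0.
have [g [g0 hg]] := om_bound.
have a0 := N0_ge0 P; have b0 := N0_ge0 Q.
set K := g * ((N0 P + 1) * (N0 Q + 1)).
have K0 : 0 < K by rewrite /K mulr_gt0 // mulr_gt0 //; lra.
have [M hM] := hH (divr_gt0 e0 K0).
exists M => m n hm hn.
have hd := hM _ _ hm hn.
have d0 := N_ge0 (Hs m - Hs n).
have -> : om (P * Hs m * Q) - om (P * Hs n * Q) = om (P * (Hs m - Hs n) * Q).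
  by rewrite -omB -mulrBl -mulrBr.
apply: (le_lt_trans (hg _)).
apply: (le_lt_trans (y := K * N (Hs m - Hs n))).
  rewrite /K -[_ * _ * N _]mulrA; apply: ler_wpM2l; first exact: ltW.
  apply: (le_trans (N_3 _ _ _)); nra.
by rewrite mulrC -ltr_pdivlMr.
Qed.

Lemma near_s P : forall e : R, 0 < e -> exists M, forall n, (M <= n)%N ->
  nrm (om (P * s (Hs n)) - om (P * Hs n)) < e.
Proof.
move=> e e0.
have [g [g0 hg]] := om_bound.
have a0 := N0_ge0 P.
set K := g * (N0 P + 1).
have K0 : 0 < K by rewrite /K mulr_gt0 //; lra.
have [M hM] := hsa (divr_gt0 e0 K0).
exists M => n hn.
have hd := hM _ hn; rewrite subr0 in hd.
have d0 := N_ge0 (s (Hs n) - Hs n).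
rewrite -omB -mulrBr.
apply: (le_lt_trans (hg _)).
apply: (le_lt_trans (y := K * N (s (Hs n) - Hs n))).
  rewrite /K -[_ * _ * N _]mulrA; apply: ler_wpM2l; first exact: ltW.
  apply: (le_trans (N_Ml _ _)); nra.
by rewrite mulrC -ltr_pdivlMr.
Qed.

Variable a : R[i].
Hypothesis hgs : ground_state s om Hs a.

Lemma F1 X : cv (fun n => om (X * Hs n)) (a * om X).
Proof.
have [l hl] := conv3 X 1.
have hl' : cv (fun n => om (X * Hs n)) l by apply: cv_ext hl => n; rewrite mulr1.
have e : obar om (fun n => X * Hs n) = l by apply: clim_eq; apply/ccvgE.
by case: hgs => h _; rewrite -h e.
Qed.

Lemma F2 X : cv (fun n => om (Hs n * X)) (a^* * om X).
Proof.
have h1 : cv (fun n => om (s X * s (Hs n))) (a * om (s X)).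
  apply: cv_near (F1 (s X)) _; exact: near_s.
have := cv_conj h1; rewrite conjM om_s conjCK.
apply: cv_ext => n; by rewrite -om_herm sK.
Qed.

Lemma a_real : a^* = a.
Proof.
have h1 := F1 1; have h2 := F2 1.
rewrite om1 !mulr1 in h1 h2.
apply: cv_uniq h2 _; apply: cv_ext h1 => n; by rewrite mul1r mulr1.
Qed.


Lemma cv_add (u v : nat -> R[i]) (l m : R[i]) : cv u l -> cv v m -> cv (fun n => u n + v n) (l + m).
Proof.
move=> hu hv; have := cv_lin 1 hu hv; rewrite mul1r.
by apply: cv_ext => n; rewrite mul1r.
Qed.

Lemma cv_scale (c : R[i]) (u : nat -> R[i]) (l : R[i]) : cv u l -> cv (fun n => c * u n) (c * l).
Proof.
move=> hu; have := cv_lin c hu (cv_cst 0); rewrite addr0.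
by apply: cv_ext => n; rewrite addr0.
Qed.

Definition LX X := @clim R (fun n => om (s X * Hs n * X)).

Lemma LX_cv X : cv (fun n => om (s X * Hs n * X)) (LX X).
Proof.
have [l hl] := conv3 (s X) X.
by rewrite /LX (clim_eq (proj2 (ccvgE _ _) hl)).
Qed.

Lemma G1 X : obar om (fun n => s X * (Hs n * X)) = LX X.
Proof.
apply: clim_eq; apply/ccvgE; apply: cv_ext (LX_cv X) => n; by rewrite mulrA.
Qed.

Lemma ii : ('i : R[i]) * 'i = -1.
Proof. by rewrite -expr2 sqr_i. Qed.

Lemma G2 X : - 'i * obar om (fun n => s X * deltaH Hs X n) = LX X - a * om (s X * X).
Proof.
have h1 := cv_scale 'i (LX_cv X).
have h2 := cv_scale (- 'i) (F1 (s X * X)).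
have h := cv_add h1 h2.
have -> : obar om (fun n => s X * deltaH Hs X n) = 'i * LX X + - 'i * (a * om (s X * X)).
  apply: clim_eq; apply/ccvgE; apply: cv_ext h => n.
  rewrite /deltaH -scalerAr omZ mulrBr omB !mulrA; ring.
transitivity (- ('i * 'i) * LX X + ('i * 'i) * (a * om (s X * X))); first ring.
rewrite ii; ring.
Qed.

Lemma omY X mu Z : om (s (X - mu *: 1) * Z * (X - mu *: 1)) =
  om (s X * Z * X) - mu * om (s X * Z) - mu^* * om (Z * X) + mu^* * mu * om Z.
Proof.
transitivity (om (s X * Z * X - mu *: (s X * Z) - (mu^* *: (Z * X) - mu *: (mu^* *: Z)))).
  congr om; rewrite sB sZ s1 !mulrBl !mulrBr.
  by rewrite ?mulr_algl ?mulr_algr -?scalerAl ?mulr_algr.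
by rewrite !omB !omZ; ring.
Qed.

Lemma LXY X : LX (X - om X *: 1) = LX X - a * (om X * (om X)^*).
Proof.
set mu := om X.
have h1 := LX_cv X.
have h2 := cv_scale (- mu) (F1 (s X)).
have h3 := cv_scale (- mu^*) (F2 X).
have h4 := cv_scale (mu^* * mu) (F1 1).
have h := cv_add h1 (cv_add h2 (cv_add h3 h4)).
have hl : cv (fun n => om (s (X - mu *: 1) * Hs n * (X - mu *: 1)))
  (LX X + (- mu * (a * om (s X)) + (- mu^* * (a^* * om X) + mu^* * mu * (a * om 1)))).
  apply: cv_ext h => n; rewrite omY.
  rewrite mul1r; ring.
have := LX_cv (X - mu *: 1) => hl'.
rewrite (cv_uniq hl' hl) om_s a_real om1 -/mu; ring.
Qed.

Lemma omYY X : om (s (X - om X *: 1) * (X - om X *: 1)) = om (s X * X) - om X * (om X)^*.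
Proof.
have := omY X (om X) 1; rewrite !mulr1 om_s om1 mul1r; move=> ->; ring.
Qed.

Hypothesis hnd : gs_nondegenerate s om Hs a.

Lemma ker_perp_om X : in_ker_perp s om Hs a X -> om X = 0.
Proof.
move=> h; have := h 1; rewrite s1 mul1r; apply; apply/hnd; exists 1.
by rewrite /lam_eq scale1r subrr s0 mul0r om0.
Qed.

Lemma Y_perp X : in_ker_perp s om Hs a (X - om X *: 1).
Proof.
move=> B /hnd [c hc].
have -> : B = (B - c *: 1) + c *: 1 by rewrite subrK.
rewrite sD mulrDl omD (om_cs _ hc) sZ s1 -scalerAl mul1r omZ omB omZ om1 mulr1 subrr.
by rewrite mulr0 addr0.
Qed.

Lemma main_equiv : gapped s om Hs a <->
   exists D : R, 0 < D /\ forall X : A,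
     D%:C * (om (s X * X) - `|om X| ^+ 2)
       <= - 'i * obar om (fun n => s X * deltaH Hs X n).
Proof.
split.
  move=> [D [D0 hD]]; exists D; split => // X.
  have := hD _ (Y_perp X); rewrite G1 LXY omYY G2 normCK.
  rewrite -subr_ge0 => h; rewrite -subr_ge0.
  set w := om (s X * X); set q := om X * (om X)^*.
  have -> : LX X - a * w - D%:C * (w - q) = LX X - a * q - (a + D%:C) * (w - q) by ring.
  exact: h.
move=> [D [D0 hD]]; exists D; split => // X hX.
have h0 := ker_perp_om hX.
have := hD X; rewrite G1 G2 h0 normr0 expr0n /= subr0.
rewrite -subr_ge0 => h; rewrite -subr_ge0.
set w := om (s X * X).
have -> : LX X - (a + D%:C) * w = LX X - a * w - D%:C * w by ring.
exact: h.
Qed.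

End Alg.

Theorem theorem5p10 (R : realType) (A : algType R[i]) (s : A -> A)
  (N0 N : A -> R) (Hs : nat -> A) (om : A -> R[i]) (a : R[i]) :
  CQstar s N0 N ->
  cauchy_seq N Hs -> selfadj s N Hs ->
  in_E s N om ->
  ground_state s om Hs a -> gs_nondegenerate s om Hs a ->
  (gapped s om Hs a <->
   exists D : R, 0 < D /\ forall X : A,
     D%:C * (om (s X * X) - `|om X| ^+ 2)
       <= - 'i * obar om (fun n => s X * deltaH Hs X n)).
Proof.
move=> hCQ hH hsa hE hgs hnd.
exact: (main_equiv hCQ hE hH hsa hgs hnd).
Qed.
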